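(* Let $A$ be a commutative ring, $p\ge1$, and $W$, $E$ as defined below. Let $F=\{F_i\}_{i\ge0}$ be a graded left $W$-module (so $F_i=0$ for $i<0$) with $F_0\neq0$. Then $F_i\ne0$ for every $0\le i\le p$. Moreover, if $F_i=0$ for all $i\ge p+1$, then the map $W\otimes_AF_0\to F$, $w\otimes f\mapsto wf$, induces an isomorphism of graded left $W$-modules \[ E\otimes_AF_0\xrightarrow{\ \cong\ }F . \]
   Context: $W$ is the graded $A$-algebra $A\langle s_1,\dots,s_p,t_1,\dots,t_p\rangle/(s_it_j+t_js_i-\delta_{ij}\mid1\le i,j\le p)$, where $A\langle\cdots\rangle$ is the free associative $A$-algebra, $|s_i|=1$, $|t_i|=-1$, and $\delta_{ij}$ is the Kronecker delta. $E$ is the quotient of $W$ by the left ideal generated by the elements $t_i$, $s_i^2$, and $s_is_j+s_js_i$ for $1\le i,j\le p$; it is a graded left $W$-module, which as an $A$-module is the exterior algebra $A[\boldsymbol s]$ on $s_1,\dots,s_p$ (free with basis the monomials $s_{i_1}\cdots s_{i_n}$, $i_1<\cdots<i_n$), with $t_i$ acting as graded derivations satisfying $t_i\cdot s_j=\delta_{ij}$. $E\otimes_AF_0$ is a graded left $W$-module via the action on $E$, with $F_0$ in degree $0$. *)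

(* Defs.v *)
From HB Require Import structures.
From mathcomp Require Import all_boot all_order all_algebra.
Set Implicit Arguments. Unset Strict Implicit. Unset Printing Implicit Defensive.
Import GRing.Theory.
Local Open Scope ring_scope.

(* A graded left W-module F = {F_i}_{i >= 0} (F_i = 0 for i < 0 is encoded by
   indexing over nat), where
   W = A<s_1..s_p,t_1..t_p>/(s_i t_j + t_j s_i - delta_ij), |s_i| = 1, |t_i| = -1.
   By the universal property of the free algebra and its quotient, such a module
   is exactly: A-modules F_n, A-linear maps s_k : F_n -> F_{n+1},
   t_k : F_{n+1} -> F_n (t_k : F_0 -> F_{-1} = 0 is zero) satisfying the
   relations s_k t_l + t_l s_k = delta_kl in every degree.
   Generators are indexed by 'I_p (0-based). *)
Record gradedWmod (A : comPzRingType) (p : nat) := GradedWmod {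
  gcomp : nat -> lmodType A;
  sact : forall (k : 'I_p) (n : nat), {linear gcomp n -> gcomp n.+1};
  tact : forall (k : 'I_p) (n : nat), {linear gcomp n.+1 -> gcomp n};
  (* degree 0: s_k t_l x = 0 since t_l x lies in F_{-1} = 0 *)
  Wrel0 : forall (k l : 'I_p) (x : gcomp 0),
    tact l 0 (sact k 0 x) = (k == l)%:R *: x;
  WrelS : forall (k l : 'I_p) (n : nat) (x : gcomp n.+1),
    sact k n (tact l n x) + tact l n.+1 (sact k n.+1 x) = (k == l)%:R *: x
}.
Arguments gcomp {A p} g n : rename.
Arguments sact {A p} g k n : rename.
Arguments tact {A p} g k n : rename.

Fixpoint smono (A : comPzRingType) (p : nat) (F : gradedWmod A p) (n : nat)
  : n.-tuple 'I_p -> gcomp F 0 -> gcomp F n :=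
  match n return n.-tuple 'I_p -> gcomp F 0 -> gcomp F n with
  | 0 => fun _ f => f
  | m.+1 => fun t f => sact F (thead t) m (@smono A p F m (behead_tuple t) f)
  end.

(* Strictly increasing n-tuples i1 < ... < in of generator indices: they index
   the A-basis monomials s_{i1}...s_{in} of E = A[s] in degree n. *)
Definition incr_tuple (p n : nat) :=
  {t : n.-tuple 'I_p | sorted (fun i j : 'I_p => (i < j)%N) t}.

(* Degree-n part of E (x)_A F_0, using the monomial basis of E:
   (E (x)_A F_0)_n = (+)_{I increasing, |I| = n} s_I (x) F_0
   ~= functions from increasing n-tuples to F_0.
   Degree-n part of the map  E (x)_A F_0 -> F,  s_I (x) f |-> s_I f. *)
Definition EtensF0_to_F (A : comPzRingType) (p : nat) (F : gradedWmod A p)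
  (n : nat) (c : {ffun incr_tuple p n -> gcomp F 0}) : gcomp F n :=
  \sum_(I : incr_tuple p n) @smono A p F n (val I) (c I).

(* Main.v *)
Require Import Defs.
From HB Require Import structures.
From mathcomp Require Import all_boot all_order all_algebra.
From mathcomp Require Import zify.
Import GRing.Theory.
Local Open Scope ring_scope.

Section Pf.
Variables (A : comPzRingType) (p : nat) (F : gradedWmod A p).
Local Notation G := (gcomp F).
Local Notation s := (sact F).
Local Notation t := (tact F).
Local Notation ltord := (fun i j : 'I_p => (i < j)%N).

Lemma ltord_trans : transitive ltord.
Proof. by move=> y x z; apply: ltn_trans. Qed.

Lemma rel0 k l (x : G 0) : t l 0 (s k 0 x) = (k == l)%:R *: x.
Proof. exact: Wrel0. Qed.

Lemma rel0ne k l (x : G 0) : k != l -> t l 0 (s k 0 x) = 0.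
Proof. by move=> H; rewrite rel0 (negbTE H) scale0r. Qed.

Lemma relS k l n (x : G n.+1) :
  t l n.+1 (s k n.+1 x) = (k == l)%:R *: x - s k n (t l n x).
Proof. by rewrite -(WrelS k l x) addrAC subrr add0r. Qed.

Lemma relS2 k l n (x : G n.+1) :
  s k n (t l n x) = (k == l)%:R *: x - t l n.+1 (s k n.+1 x).
Proof. by rewrite -(WrelS k l x) addrK. Qed.

Lemma relSne k l n (x : G n.+1) : k != l ->
  t l n.+1 (s k n.+1 x) = - s k n (t l n x).
Proof. by move=> H; rewrite relS (negbTE H) scale0r sub0r. Qed.

Fixpoint degS (L : seq 'I_p) n := match L with [::] => n | _ :: L' => (degS L' n).+1 end.
Fixpoint supS (L : seq 'I_p) n : G n.+1 -> G (degS L n).+1 :=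
  match L return G n.+1 -> G (degS L n).+1 with
  | [::] => fun y => y
  | l :: L' => fun y => s l (degS L' n).+1 (supS L' n y) end.

Lemma degSE L n : degS L n = (size L + n)%N.
Proof. by elim: L => //= _ L ->. Qed.

Lemma supS_t L n (y : G n.+1) l : (forall k, t k n y = 0) -> l \notin L ->
  t l (degS L n) (supS L n y) = 0.
Proof.
move=> Hy; elim: L => [_|k L IH] /=; first exact: Hy.
rewrite in_cons negb_or => /andP[Hlk HlL].
rewrite relSne; last by rewrite eq_sym.
by rewrite IH // raddf0 oppr0.
Qed.

Fixpoint Tseq (L : seq 'I_p) (n : nat) : G n -> G 0 :=
  match L, n return G n -> G 0 with
  | [::], 0 => fun y => y
  | [::], _.+1 => fun _ => 0
  | _ :: _, 0 => fun _ => 0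
  | l :: L', m.+1 => fun y => Tseq L' m (t l m y)
  end.

Lemma TseqD L n (x y : G n) : Tseq L n (x + y) = Tseq L n x + Tseq L n y.
Proof.
elim: L n x y => [|l L IH] [|n] x y //=; rewrite ?addr0 //.
by rewrite raddfD IH.
Qed.

Lemma TseqZ L n c (x : G n) : Tseq L n (c *: x) = c *: Tseq L n x.
Proof.
elim: L n x => [|l L IH] [|n] x //=; rewrite ?scaler0 //.
by rewrite linearZ IH.
Qed.

Lemma Tseq0 L n : Tseq L n 0 = 0.
Proof. by have := TseqZ L n 0 0; rewrite !scale0r. Qed.

Lemma TseqN L n (x : G n) : Tseq L n (- x) = - Tseq L n x.
Proof. by rewrite -scaleN1r TseqZ scaleN1r. Qed.

Lemma TseqB L n (x y : G n) : Tseq L n (x - y) = Tseq L n x - Tseq L n y.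
Proof. by rewrite TseqD TseqN. Qed.

Lemma Tseq_sum L n (I : finType) (f : I -> G n) :
  Tseq L n (\sum_i f i) = \sum_i Tseq L n (f i).
Proof. exact: (big_morph _ (TseqD L n) (Tseq0 L n)). Qed.

Lemma L1 m (I : m.+1.-tuple 'I_p) j (f : G 0) : j \notin I ->
  t j m (@smono A p F m.+1 I f) = 0.
Proof.
elim: m I => [|m IH] I; rewrite [in j \notin I](tuple_eta I) inE negb_or => /andP[H1 H2] /=.
  by rewrite rel0ne // eq_sym.
rewrite relSne; last by rewrite eq_sym.
by rewrite IH // raddf0 oppr0.
Qed.

Lemma L2 (J : seq 'I_p) i m (X : G m) : i \notin J -> Tseq J m.+1 (s i m X) = 0.
Proof.
elim: J m X => [|j J IH] m X //=.
rewrite in_cons negb_or => /andP[Hij HiJ].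
case: m X => [|m] X.
  by rewrite rel0ne // Tseq0.
by rewrite relSne // TseqN IH // oppr0.
Qed.

Lemma sorted_notin (j : 'I_p) J : sorted ltord (j :: J) -> j \notin J.
Proof.
rewrite /= (path_sortedE ltord_trans) => /andP[/allP H _].
by apply/negP => /H /=; rewrite ltnn.
Qed.

Lemma sorted_all (j : 'I_p) J : sorted ltord (j :: J) -> all (ltord j) J.
Proof. by rewrite /= (path_sortedE ltord_trans) => /andP[]. Qed.

Lemma tuple_eqS n (I J : n.+1.-tuple 'I_p) :
  (I == J) = (thead I == thead J) && (behead_tuple I == behead_tuple J).
Proof. by rewrite {1}(tuple_eta I) {1}(tuple_eta J). Qed.

Lemma tvalS n (I : n.+1.-tuple 'I_p) : tval I = thead I :: behead_tuple I.
Proof. by rewrite {1}(tuple_eta I). Qed.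

Lemma L3 n (I J : n.-tuple 'I_p) (f : G 0) : sorted ltord I -> sorted ltord J ->
  Tseq J n (@smono A p F n I f) = (I == J)%:R *: f.
Proof.
elim: n I J => [|n IH] I J.
  by rewrite (tuple0 I) (tuple0 J) eqxx /= scale1r.
rewrite tuple_eqS (tvalS _ J) (tvalS _ I) => HI HJ.
change (@smono A p F n.+1 I f) with (s (thead I) n (@smono A p F n (behead_tuple I) f)).
move: (thead I) (thead J) (behead_tuple I) (behead_tuple J) HI HJ IH.
move=> i j I' J' HI HJ IH /=.
have HI' : sorted ltord I' by move: HI => /= /path_sorted.
have HJ' : sorted ltord J' by move: HJ => /= /path_sorted.
case: n IH I J I' J' HI HJ HI' HJ' => [|m] IH I J I' J' HI HJ HI' HJ'.
  rewrite rel0 TseqZ /= (tuple0 I') (tuple0 J') eqxx andbT.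
  by [].

rewrite (@relS i j m) TseqB TseqZ IH //.
have [Eij|Nij] := eqVneq i j.
  rewrite Eij /= L2 ?subr0 ?scalerA -?natrM ?mul1n //.
  exact: sorted_notin.
rewrite scale0r sub0r /=.
case: (boolP (i \in J')) => HiJ.
  have Hji : (j < i)%N by move/allP: (sorted_all _ _ HJ) => /(_ i HiJ).
  rewrite L1 ?raddf0 ?Tseq0 ?oppr0 ?scale0r //.
  apply/negP => HjI; move/allP: (sorted_all _ _ HI) => /(_ j HjI) /=.
  by move=> Hij; move: (ltn_trans Hij Hji); rewrite ltnn.
by rewrite L2 // oppr0 scale0r.
Qed.

Section Bound.
Hypothesis hb : forall i : nat, (p + 1 <= i)%N -> forall x : G i, x = 0.

Lemma vacuum0 n (y : G n.+1) : (forall k, t k n y = 0) -> y = 0.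
Proof.
move=> Hy.
suff H : forall L, uniq L -> supS L n y = 0 -> y = 0.
  apply: (H (enum 'I_p)); first exact: enum_uniq.
  apply: hb; rewrite degSE size_enum_ord; lia.
elim=> [|l L IH] /=; first by [].
move=> /andP[HlL Hu] H0; apply: IH Hu _.
have := relS l l _ (supS L n y).
by rewrite H0 raddf0 eqxx scale1r supS_t // raddf0 subr0 => <-.
Qed.

Lemma covac m (S : {set 'I_p}) (u : G m) : (m < #|S|)%N ->
  (forall l, l \in S -> s l m u = 0) -> u = 0.
Proof.
elim: m S u => [|m IH] S u HS Hs.
  have [l lS] : exists l, l \in S by apply/card_gt0P; lia.
  by have := rel0 l l u; rewrite Hs // raddf0 eqxx scale1r => <-.
have [l lS] : exists l, l \in S by apply/card_gt0P; lia.
have := relS l l _ u; rewrite Hs // raddf0 eqxx scale1r => /eqP.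
rewrite eq_sym subr_eq0 => /eqP ->.
suff -> : t l m u = 0 by rewrite raddf0.
apply: (IH (S :\ l)).
  by move: HS; rewrite (cardsD1 l S) lS; lia.
move=> k; rewrite !inE => /andP[Hkl kS].
have := @relSne k l m u Hkl; rewrite Hs // raddf0 => /esym /eqP.
by rewrite oppr_eq0 => /eqP.
Qed.

Lemma comm_zero (X : forall m, G m.+2 -> G m) :
  (forall m, X m 0 = 0) ->
  (forall m k w, s k m (X m w) = X m.+1 (s k m.+2 w)) -> forall m w, X m w = 0.
Proof.
move=> X0 Xs.
suff H : forall d m, (p <= m + d)%N -> forall w, X m w = 0.
  by move=> m w; apply: (H p); lia.
elim=> [|d IH] m Hm w.
  by rewrite (hb _ _ w) ?X0 //; lia.
case: (leqP p m) => Hpm.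
  by rewrite (hb _ _ w) ?X0 //; lia.
apply: (@covac _ [set: 'I_p]); first by rewrite cardsT card_ord.
by move=> k _; rewrite Xs (IH m.+1) //; lia.
Qed.

Lemma tt0 l m (w : G m.+2) : t l m (t l m.+1 w) = 0.
Proof.
apply: (comm_zero (fun m w => t l m (t l m.+1 w))) => [m'|m' k w'].
  by rewrite !raddf0.
rewrite relS2 (relS2 k l m'.+1) linearB linearZ /=.
by rewrite opprB addrC subrK.
Qed.

Lemma zmod4 (V : zmodType) (a b c d : V) : (a - (b - c)) + (b - (a - d)) = c + d.
Proof.
rewrite !opprB addrACA. rewrite [c - b + _]addrACA. rewrite [a + b]addrC. rewrite [- b + _]addrC. rewrite addrACA.
by rewrite addNKr addrC addKr.
Qed.

Lemma zmod4' (V : zmodType) (a b c d : V) : a + (- b + c) + (b + (- a + d)) = c + d.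
Proof.
rewrite addrACA [- b + c + _]addrACA [a + b + _]addrA -opprD [b + a]addrC addrN add0r.
by [].
Qed.

Lemma tt_anti j l m (w : G m.+2) : t j m (t l m.+1 w) = - t l m (t j m.+1 w).
Proof.
apply/eqP; rewrite -addr_eq0; apply/eqP.
move: m w; apply: (comm_zero (fun m w => t j m (t l m.+1 w) + t l m (t j m.+1 w))) => [m'|m' k w'].
  by rewrite !raddf0 addr0.
rewrite raddfD /= relS2 (relS2 k l m'.+1) relS2 (relS2 k j m'.+1).
rewrite !linearB !linearZ /= !scalerN !opprK.
exact: zmod4'.
Qed.

Lemma Ins (K : seq 'I_p) : sorted ltord K -> forall n l,
  (forall w : G n, Tseq (l :: K) n w = 0) \/
  exists J : seq 'I_p, [/\ size J = (size K).+1, sorted ltord J, {subset J <= l :: K}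
     & exists c : A, forall w : G n, Tseq (l :: K) n w = c *: Tseq J n w].
Proof.
elim: K => [|j K IH] HK n l.
  right; exists [:: l]; split => //; exists 1 => w; by rewrite scale1r.
have HK' : sorted ltord K by move: HK => /= /path_sorted.
have Hj := sorted_all _ _ HK.
case: (ltngtP l j) => Hlj.
- right; exists (l :: j :: K); split => //=; first by rewrite Hlj.
  by exists 1 => w; rewrite scale1r.
- case: n => [|[|m]]; try by left.
  have := IH HK' m.+1 l; case=> [H0|[J [HsJ HJs Hsub [c Hc]]]].
    left => w /=.
    rewrite tt_anti TseqN.
    by have /= -> := H0 (t j m.+1 w); rewrite oppr0.
  right; exists (j :: J); split => /=; first by rewrite HsJ.
  + rewrite (path_sortedE ltord_trans) HJs andbT.
    apply/allP => x /Hsub; rewrite in_cons => /orP[/eqP -> //|].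
    by move/allP: Hj => H /H.
  + move=> x; rewrite !in_cons => /orP[->|/Hsub]; first by rewrite orbT.
    by rewrite in_cons => /orP[->|->]; rewrite ?orbT.
  + exists (- c) => w /=.
    rewrite tt_anti TseqN.
    by have /= -> := Hc (t j m.+1 w); rewrite scaleNr.
- left; case: n => [|[|m]] w //=.
  have Elj : l = j by apply: val_inj.
  by rewrite Elj tt0 Tseq0.
Qed.

Lemma Gthm n (y : G n) :
  (forall J : seq 'I_p, size J = n -> sorted ltord J -> Tseq J n y = 0) -> y = 0.
Proof.
elim: n y => [|n IH] y H.
  by have := H [::] erefl isT.
apply: vacuum0 => l; apply: IH => K HsK HK.
have := Ins _ HK (n.+1) l; case=> [H0|[J [HsJ HJs _ [c Hc]]]].
  exact: (H0 y).
have /= -> := Hc y.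
by rewrite H ?scaler0 // HsJ HsK.
Qed.

End Bound.
End Pf.

Theorem propositionA3 (A : comPzRingType) (p : nat) (F : gradedWmod A p) :
  (1 <= p)%N ->
  (exists x : gcomp F 0, x != 0) ->
  (forall i : nat, (i <= p)%N -> exists x : gcomp F i, x != 0) /\
  ((forall i : nat, (p + 1 <= i)%N -> forall x : gcomp F i, x = 0) ->
    [/\ (* W (x)_A F_0 -> F factors through E (x)_A F_0: the left-ideal
           generators s_k^2 and s_k s_l + s_l s_k kill F_0 (t_k kills F_0
           automatically, F_{-1} = 0) *)
        (forall (k : 'I_p) (f : gcomp F 0), sact F k 1 (sact F k 0 f) = 0),
        (forall (k l : 'I_p) (f : gcomp F 0),
            sact F k 1 (sact F l 0 f) + sact F l 1 (sact F k 0 f) = 0)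
      & (* and the induced map E (x)_A F_0 -> F is bijective in each degree *)
        forall n : nat, bijective (@EtensF0_to_F A p F n)]).
Proof.
move=> p1 [x0 Hx0]; split.
  move=> i Hi.
  pose s0 := take i (enum 'I_p).
  have Hs0 : size s0 == i by rewrite size_takel ?size_enum_ord.
  have Hsort : sorted (fun i j : 'I_p => (i < j)%N) (Tuple Hs0).
    apply: take_sorted.
    have := iota_ltn_sorted 0 p; rewrite -val_enum_ord.
    by rewrite (@sorted_map _ _ val ltn).
  exists (@smono A p F i (Tuple Hs0) x0); apply/negP => /eqP H.
  have := @L3 A p F i _ _ x0 Hsort Hsort; rewrite H Tseq0 eqxx scale1r => H'.
  by rewrite -H' eqxx in Hx0.
move=> hb; split.
- move=> k f; apply: (@vacuum0 A p F hb) => l.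
  by rewrite relS rel0 linearZ /= subrr.
- move=> k l f; apply: (@vacuum0 A p F hb) => j.
  rewrite raddfD /= !relS !rel0 !linearZ /=.
  by rewrite !scalerN addrA subrK subrr.
- move=> n.
  pose g (y : gcomp F n) : {ffun incr_tuple p n -> gcomp F 0} :=
    [ffun J : incr_tuple p n => @Tseq A p F (val (val J)) n y].
  have hPg : cancel (@EtensF0_to_F A p F n) g.
    move=> c; apply/ffunP => J; rewrite ffunE /EtensF0_to_F Tseq_sum (bigD1 J) //=.
    rewrite L3 ?(valP J) // eqxx scale1r big1 ?addr0 // => I HIJ.
    rewrite L3 ?(valP J) ?(valP I) //.
    by rewrite (inj_eq val_inj) (negbTE HIJ) scale0r.
  exists g => // y.
  apply/eqP; rewrite -subr_eq0; apply/eqP; apply: (@Gthm A p F hb) => K HsK HK.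
  have HsK' : size K == n by rewrite HsK.
  pose KJ : incr_tuple p n := exist _ (Tuple HsK') HK.
  rewrite TseqB.
  have := congr1 (fun c : {ffun incr_tuple p n -> gcomp F 0} => c KJ) (hPg (g y)); rewrite !ffunE /= => ->.
  by rewrite subrr.
Qed.
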